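(* Let $N\ge2$ and $0=x_0<x_1<\dots<x_N=1$, $I=[0,1]$, $I_i=[x_{i-1},x_i]$, $|I_i|=x_i-x_{i-1}$, $L_i(x)=x_{i-1}+|I_i|x$ for $i=1,\dots,N$. Let $\alpha_i,\beta_i,\gamma_i$ be reals with $|\alpha_i|<1$ and $|\beta_i|+|\gamma_i|<1$, let $p_i\in\mathrm{Lip}\,\lambda_i$ and $q_i\in\mathrm{Lip}\,\mu_i$ with $0<\lambda_i,\mu_i\le1$, and let $f_1,f_2:I\to\mathbb{R}$ be continuous with $f_1(L_i(x))=\alpha_if_1(x)+\beta_if_2(x)+p_i(x)$ and $f_2(L_i(x))=\gamma_if_2(x)+q_i(x)$ for all $x\in I$, $i=1,\dots,N$. Put $\lambda=\min_i\lambda_i$, $\mu=\min_i\mu_i$, $\Omega=\max_i |\alpha_i|/|I_i|^{\lambda}$, $\Gamma=\max_i|\gamma_i|/|I_i|^{\mu}$, $\Theta=\max_i|\alpha_i|/|I_i|^{\mu}$, and suppose $\Theta<1$. Then: (a) if $\Omega\ne1$ and $\Gamma\ne1$, there is $\delta\in(0,1]$ with $f_1\in\mathrm{Lip}\,\delta$; (b) if $\Omega=1$ or $\Gamma=1$, there is $\delta\in(0,1]$ with $\omega(f_1,t)=O(|t|^{\delta}\log|t|)$ as $t\to0$.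
   Context: $\mathrm{Lip}\,\delta$ denotes the class of functions $g$ on $I$ such that $|g(x)-g(y)|\le C|x-y|^{\delta}$ for some constant $C$ and all $x,y\in I$. $\omega(f_1,t)=\sup\{|f_1(x)-f_1(y)|: x,y\in I,\ |x-y|\le |t|\}$ is the modulus of continuity. The function $f_1$ is the coalescence hidden variable fractal interpolation function (CHFIF): $(f_1,f_2)$ is the continuous function whose graph is the attractor of the IFS $\omega_i(x,y,z)=(L_i(x),\alpha_iy+\beta_iz+p_i(x),\gamma_iz+q_i(x))$. *)

(* Defs.v *)
From Stdlib Require Import Reals.
From Coquelicot Require Import Coquelicot.
Open Scope R_scope.

(* real power with the convention 0^d = 0 (for d > 0); Rpower itself is
   only meaningful for a positive base *)
Definition rpow (x d : R) : R := if Rle_dec x 0 then 0 else Rpower x d.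

Definition inI (x : R) : Prop := 0 <= x <= 1.

Definition Lip (delta : R) (g : R -> R) : Prop :=
  exists C : R, forall x y, inI x -> inI y ->
    Rabs (g x - g y) <= C * rpow (Rabs (x - y)) delta.

Definition cont_on_I (g : R -> R) : Prop :=
  forall x, inI x -> forall eps, 0 < eps -> exists d, 0 < d /\
    forall y, inI y -> Rabs (y - x) < d -> Rabs (g y - g x) < eps.

Definition modcont (g : R -> R) (t : R) : Rbar :=
  Lub_Rbar (fun r => exists x y, inI x /\ inI y /\ Rabs (x - y) <= Rabs t /\
                                 r = Rabs (g x - g y)).

Fixpoint max_1N (f : nat -> R) (n : nat) : R :=
  match n with
  | O => f O
  | S O => f 1%nat
  | S m => Rmax (max_1N f m) (f n)
  end.
Fixpoint min_1N (f : nat -> R) (n : nat) : R :=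
  match n with
  | O => f O
  | S O => f 1%nat
  | S m => Rmin (min_1N f m) (f n)
  end.

(* Main.v *)
Require Import Defs.
From Stdlib Require Import Reals Lra Lia.
From Coquelicot Require Import Coquelicot.
Open Scope R_scope.
Lemma exp_le' x y : x <= y -> exp x <= exp y.
Proof. intros [H|H]. left; apply exp_increasing; auto. subst; lra. Qed.

Lemma rpow_ge0 d e : 0 <= rpow d e.
Proof. unfold rpow; destruct Rle_dec; [lra|]. unfold Rpower; left; apply exp_pos. Qed.

Lemma rpow_pos d e : 0 < d -> rpow d e = Rpower d e.
Proof. intros; unfold rpow; destruct Rle_dec; lra. Qed.

Lemma rpow_mono_base d1 d2 e : 0 <= e -> 0 <= d1 <= d2 -> rpow d1 e <= rpow d2 e.
Proof.
  intros He [H1 H2]. destruct (Req_dec d1 0).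
  - subst. unfold rpow at 1; destruct Rle_dec; [|lra]. apply rpow_ge0.
  - rewrite !rpow_pos by lra. apply Rle_Rpower_l; lra.
Qed.

Lemma rpow_mono_exp d e1 e2 : 0 <= d <= 1 -> e1 <= e2 -> rpow d e2 <= rpow d e1.
Proof.
  intros Hd He. destruct (Req_dec d 0).
  - subst. unfold rpow; destruct Rle_dec; lra.
  - rewrite !rpow_pos by lra. unfold Rpower. apply exp_le'.
    assert (ln d <= 0). { destruct (Req_dec d 1). subst; rewrite ln_1; lra.
      left; rewrite <- ln_1; apply ln_increasing; lra. }
    nra.
Qed.

Lemma Rpower_powk a e k : 0 < a -> Rpower (a ^ k) e = (Rpower a e) ^ k.
Proof.
  intros Ha. induction k. simpl. unfold Rpower; rewrite ln_1, Rmult_0_r; apply exp_0.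
  simpl. rewrite <- Rpower_mult_distr by (try apply pow_lt; lra). rewrite IHk; ring.
Qed.
Definition clamp (x : R) := Rmax 0 (Rmin 1 x).
Lemma clamp_I x : inI (clamp x).
Proof. unfold clamp, inI, Rmax, Rmin; repeat destruct Rle_dec; lra. Qed.
Lemma clamp_id x : inI x -> clamp x = x.
Proof. unfold clamp, inI, Rmax, Rmin; intros; repeat destruct Rle_dec; lra. Qed.
Lemma clamp_lip x y : Rabs (clamp x - clamp y) <= Rabs (x - y).
Proof. unfold clamp, Rmax, Rmin; repeat destruct Rle_dec; unfold Rabs; repeat destruct Rcase_abs; lra. Qed.

Lemma bounded h : cont_on_I h -> exists B, 0 <= B /\ forall x y, inI x -> inI y -> Rabs (h x - h y) <= B.
Proof.
  intros Hc.
  set (g := fun x => Rabs (h (clamp x))).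
  assert (Hg : forall c, 0 <= c <= 1 -> continuity_pt g c).
  { intros c _. unfold continuity_pt, continue_in, limit1_in, limit_in. intros eps He.
    destruct (Hc (clamp c) (clamp_I c) eps He) as [d [Hd Hd2]].
    exists d; split; [lra|]. intros x [_ Hx]. simpl in *. unfold R_dist in *.
    unfold g. eapply Rle_lt_trans; [apply Rabs_triang_inv2|].
    apply Hd2. apply clamp_I. eapply Rle_lt_trans; [apply clamp_lip|exact Hx]. }
  destruct (continuity_ab_maj g 0 1 ltac:(lra) Hg) as [M [HM _]].
  exists (2 * g M). split. unfold g; pose proof (Rabs_pos (h (clamp M))); lra.
  intros x y Hx Hy. pose proof (HM x Hx) as A. pose proof (HM y Hy) as B.
  unfold g in A, B. rewrite clamp_id in A, B by auto.
  unfold g. pose proof (Rabs_triang (h x) (- h y)). rewrite Rabs_Ropp in H. unfold Rminus. lra.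
Qed.
Lemma fin_lower (v : nat -> R) n : (forall i, (1<=i<=n)%nat -> 0 < v i) ->
  exists m, 0 < m /\ forall i, (1<=i<=n)%nat -> m <= v i.
Proof.
  induction n; intros H.
  - exists 1; split; [lra|]; intros; lia.
  - destruct IHn as [m [Hm Hi]]. intros; apply H; lia.
    exists (Rmin m (v (S n))). split. apply Rmin_pos; auto; apply H; lia.
    intros i Hi'. destruct (Nat.eq_dec i (S n)). subst; apply Rmin_r.
    eapply Rle_trans; [apply Rmin_l|]; apply Hi; lia.
Qed.

Lemma fin_gmax (c : nat -> R) n : (forall i, (1<=i<=n)%nat -> Rabs (c i) < 1) ->
  exists g, 0 <= g < 1 /\ forall i, (1<=i<=n)%nat -> Rabs (c i) <= g.
Proof.
  induction n; intros H.
  - exists 0; split; [lra|]; intros; lia.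
  - destruct IHn as [m [Hm Hi]]. intros; apply H; lia.
    exists (Rmax m (Rabs (c (S n)))). split. split. eapply Rle_trans; [|apply Rmax_l]; lra.
    apply Rmax_lub_lt; [lra|apply H; lia].
    intros i Hi'. destruct (Nat.eq_dec i (S n)). subst; apply Rmax_r.
    eapply Rle_trans; [|apply Rmax_l]; apply Hi; lia.
Qed.

Lemma fin_upper (P : nat -> R -> Prop) n : (forall i, (1<=i<=n)%nat -> exists C, P i C) ->
  (forall i C C', P i C -> C <= C' -> P i C') ->
  exists C, 0 <= C /\ forall i, (1<=i<=n)%nat -> P i C.
Proof.
  intros H Hm. induction n.
  - exists 0; split; [lra|]; intros; lia.
  - destruct IHn as [m [Hm0 Hi]]. intros; apply H; lia.
    destruct (H (S n)) as [C HC]. lia.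
    exists (Rmax m C). split. eapply Rle_trans; [|apply Rmax_l]; lra.
    intros i Hi'. destruct (Nat.eq_dec i (S n)). subst; eapply Hm; [exact HC|apply Rmax_r].
    eapply Hm; [apply Hi; lia|apply Rmax_l].
Qed.

Lemma cell (xs : nat -> R) N : (forall i, (1<=i<=N)%nat -> xs (i-1)%nat < xs i) ->
  forall m, (1<=m<=N)%nat -> forall x, xs 0%nat <= x <= xs m ->
  exists i, (1<=i<=m)%nat /\ xs (i-1)%nat <= x <= xs i.
Proof.
  intros Hx m. induction m; intros Hm x Hxm. lia.
  destruct (Nat.eq_dec m 0). subst. exists 1%nat. simpl. split; [lia|lra].
  destruct (Rle_dec x (xs m)).
  - destruct (IHm ltac:(lia) x ltac:(lra)) as [i [Hi Hi']]. exists i; split; [lia|auto].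
  - exists (S m). split; [lia|]. replace (S m - 1)%nat with m by lia. lra.
Qed.

Lemma pull N xs c r h a g rho R0 i k x y :
  (forall i, (1<=i<=N)%nat -> a <= xs i - xs (i-1)%nat) -> 0 < a ->
  (forall i, (1<=i<=N)%nat -> Rabs (c i) <= g) ->
  (forall i k u v, (1<=i<=N)%nat -> inI u -> inI v -> Rabs (u - v) <= a^k ->
      Rabs (r i u - r i v) <= R0 * rho^k) ->
  (forall i x, (1<=i<=N)%nat -> inI x ->
      h (xs (i-1)%nat + (xs i - xs (i-1)%nat) * x) = c i * h x + r i x) ->
  (1<=i<=N)%nat -> xs (i-1)%nat <= x <= xs i -> xs (i-1)%nat <= y <= xs i ->
  Rabs (x - y) <= a ^ S k ->
  inI ((x - xs (i-1)%nat) / (xs i - xs (i-1)%nat)) /\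
  inI ((y - xs (i-1)%nat) / (xs i - xs (i-1)%nat)) /\
  Rabs ((x - xs (i-1)%nat) / (xs i - xs (i-1)%nat) - (y - xs (i-1)%nat) / (xs i - xs (i-1)%nat)) <= a ^ k /\
  Rabs (h x - h y) <= g * Rabs (h ((x - xs (i-1)%nat) / (xs i - xs (i-1)%nat))
                              - h ((y - xs (i-1)%nat) / (xs i - xs (i-1)%nat))) + R0 * rho ^ k.
Proof.
  intros Hlen Ha Hc Hr Hfe Hi Hx Hy Hxy.
  set (s := xs (i-1)%nat) in *. set (l := xs i - s) in *.
  assert (Hl : a <= l) by (apply Hlen; auto).
  set (u := (x - s) / l). set (v := (y - s) / l).
  assert (Hu : x = s + l * u) by (unfold u; field; lra).
  assert (Hv : y = s + l * v) by (unfold v; field; lra).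
  assert (Hxi : xs i = s + l) by (unfold l; ring).
  assert (Hs : xs (i-1)%nat = s) by reflexivity.
  clearbody u v l s.
  assert (Iu : inI u). { unfold inI; split.
    destruct (Rle_lt_dec 0 u); auto. assert (l * u < 0) by (apply Rmult_pos_neg; lra). lra.
    destruct (Rle_lt_dec u 1); auto. assert (l * (u-1) > 0) by (apply Rmult_lt_0_compat; lra). lra. }
  assert (Iv : inI v). { unfold inI; split.
    destruct (Rle_lt_dec 0 v); auto. assert (l * v < 0) by (apply Rmult_pos_neg; lra). lra.
    destruct (Rle_lt_dec v 1); auto. assert (l * (v-1) > 0) by (apply Rmult_lt_0_compat; lra). lra. }
  assert (Huv : Rabs (u - v) <= a ^ k).
  { assert (E : Rabs (x - y) = l * Rabs (u - v)).
    { rewrite Hu, Hv. replace (s + l * u - (s + l * v)) with (l * (u - v)) by ring.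
      rewrite Rabs_mult, (Rabs_pos_eq l) by lra. auto. }
    simpl in Hxy. pose proof (pow_le a k ltac:(lra)). pose proof (Rabs_pos (u - v)). nra. }
  split; [auto|split; [auto|split; [auto|]]].
  assert (Ex : h x = c i * h u + r i u).
  { rewrite Hu. pose proof (Hfe i u Hi Iu) as E. rewrite Hs, Hxi in E.
    replace (s + (s + l - s) * u) with (s + l * u) in E by ring. exact E. }
  assert (Ey : h y = c i * h v + r i v).
  { rewrite Hv. pose proof (Hfe i v Hi Iv) as E. rewrite Hs, Hxi in E.
    replace (s + (s + l - s) * v) with (s + l * v) in E by ring. exact E. }
  rewrite Ex, Ey.
  replace (c i * h u + r i u - (c i * h v + r i v)) with (c i * (h u - h v) + (r i u - r i v)) by ring.
  eapply Rle_trans; [apply Rabs_triang|]. rewrite Rabs_mult.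
  pose proof (Hc i Hi). pose proof (Rabs_pos (h u - h v)). pose proof (Hr i k u v Hi Iu Iv Huv). nra.
Qed.
Lemma gen_geo N xs c r h a g rho R0 B :
  (1 <= N)%nat -> xs 0%nat = 0 -> xs N = 1 ->
  (forall i, (1<=i<=N)%nat -> xs (i-1)%nat < xs i) ->
  (forall i, (1<=i<=N)%nat -> a <= xs i - xs (i-1)%nat) -> 0 < a -> a <= 1 ->
  0 <= g < 1 -> (forall i, (1<=i<=N)%nat -> Rabs (c i) <= g) ->
  0 <= rho < 1 -> 0 <= R0 ->
  (forall i k u v, (1<=i<=N)%nat -> inI u -> inI v -> Rabs (u - v) <= a^k ->
      Rabs (r i u - r i v) <= R0 * rho^k) ->
  (forall x y, inI x -> inI y -> Rabs (h x - h y) <= B) ->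
  (forall i x, (1<=i<=N)%nat -> inI x ->
      h (xs (i-1)%nat + (xs i - xs (i-1)%nat) * x) = c i * h x + r i x) ->
  exists theta K, 0 <= theta < 1 /\ 0 <= K /\
    forall k x y, inI x -> inI y -> Rabs (x - y) <= a^k -> Rabs (h x - h y) <= K * theta^k.
Proof.
  intros HN H0 H1 Hord Hlen Ha Ha1 Hg Hc Hrho HR0 Hr HB Hfe.
  assert (B0 : 0 <= B). { pose proof (HB 0 0 ltac:(unfold inI; lra) ltac:(unfold inI; lra)). pose proof (Rabs_pos (h 0 - h 0)). lra. }
  set (m := Rmax g rho).
  assert (Hm1 : g <= m) by apply Rmax_l. assert (Hm2 : rho <= m) by apply Rmax_r.
  assert (Hm3 : m < 1) by (apply Rmax_lub_lt; lra).
  set (th := (1 + m) / 2).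
  assert (Tg : 0 < th - g) by (unfold th; lra).
  set (K := Rmax B (R0 / (th - g))).
  assert (KB : B <= K) by apply Rmax_l.
  assert (KR : R0 <= K * (th - g)).
  { assert (R0 / (th - g) <= K) by apply Rmax_r.
    replace R0 with ((R0 / (th - g)) * (th - g)) by (field; lra). nra. }
  assert (Hth : 0 <= th < 1) by (unfold th; lra).
  assert (Hrt : rho <= th) by (unfold th; lra).
  assert (ArA : forall k M, 0 <= M <= K * th ^ k -> g * M + R0 * rho ^ k <= K * th ^ S k).
  { intros k M HM. pose proof (pow_incr rho th k ltac:(lra)). pose proof (pow_le rho k ltac:(lra)).
    assert (g * M <= g * (K * th ^ k)) by (apply Rmult_le_compat_l; lra).
    assert (R0 * rho ^ k <= R0 * th ^ k) by (apply Rmult_le_compat_l; lra).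
    assert (R0 * th ^ k <= K * (th - g) * th ^ k) by (apply Rmult_le_compat_r; [apply pow_le; lra| lra]).
    simpl. nra. }
  assert (ArB : forall k M, 0 <= M <= 2 * K * th ^ k -> g * M + R0 * rho ^ k <= 2 * K * th ^ S k).
  { intros k M HM. pose proof (pow_incr rho th k ltac:(lra)). pose proof (pow_le rho k ltac:(lra)).
    pose proof (pow_le th k ltac:(lra)).
    assert (g * M <= g * (2 * K * th ^ k)) by (apply Rmult_le_compat_l; lra).
    assert (R0 * rho ^ k <= R0 * th ^ k) by (apply Rmult_le_compat_l; lra).
    assert (R0 * th ^ k <= K * (th - g) * th ^ k) by (apply Rmult_le_compat_r; [apply pow_le; lra| lra]).
    assert (0 <= K * (th - g) * th ^ k) by (apply Rmult_le_pos; [apply Rmult_le_pos|]; lra).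
    simpl. nra. }
  assert (Hak : forall k, a ^ S k <= a).
  { intros k. simpl. pose proof (pow_le a k ltac:(lra)). pose proof (pow_incr a 1 k ltac:(lra)) as P1.
    rewrite pow1 in P1. nra. }
  assert (E : forall k y, inI y ->
     (Rabs (0 - y) <= a ^ k -> Rabs (h 0 - h y) <= K * th ^ k) /\
     (Rabs (1 - y) <= a ^ k -> Rabs (h 1 - h y) <= K * th ^ k)).
  { induction k; intros y Iy.
    - simpl. rewrite Rmult_1_r. split; intros _.
      + pose proof (HB 0 y ltac:(unfold inI; lra) Iy). lra.
      + pose proof (HB 1 y ltac:(unfold inI; lra) Iy). lra.
    - split; intros Hy.
      + pose proof (Hlen 1%nat ltac:(lia)) as L1. simpl in L1. rewrite H0 in L1.
        assert (y <= a). { pose proof (Hak k). unfold inI, Rabs in *; destruct Rcase_abs; lra. }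
        assert (P1 : xs (1-1)%nat <= 0 <= xs 1%nat) by (simpl; rewrite H0; lra).
        assert (P2 : xs (1-1)%nat <= y <= xs 1%nat) by (simpl; rewrite H0; unfold inI in Iy; lra).
        destruct (pull N xs c r h a g rho R0 1%nat k 0 y Hlen Ha Hc Hr Hfe ltac:(lia) P1 P2 Hy)
          as [Iu [Iv [Huv Hb]]].
        simpl in Iu, Iv, Huv, Hb. rewrite H0 in Iu, Iv, Huv, Hb.
        replace ((0 - 0) / (xs 1%nat - 0)) with 0 in * by (field; lra).
        destruct (IHk _ Iv) as [IH _]. specialize (IH Huv).
        eapply Rle_trans; [exact Hb|]. apply ArA. split; [apply Rabs_pos|exact IH].
      + pose proof (Hlen N ltac:(lia)) as LN. rewrite H1 in LN.
        assert (1 - a <= y). { pose proof (Hak k). unfold inI, Rabs in *; destruct Rcase_abs; lra. }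
        assert (P1 : xs (N-1)%nat <= 1 <= xs N) by (rewrite H1; lra).
        assert (P2 : xs (N-1)%nat <= y <= xs N) by (rewrite H1; unfold inI in Iy; lra).
        destruct (pull N xs c r h a g rho R0 N k 1 y Hlen Ha Hc Hr Hfe ltac:(lia) P1 P2 Hy)
          as [Iu [Iv [Huv Hb]]].
        rewrite H1 in Iu, Iv, Huv, Hb.
        replace ((1 - xs (N - 1)%nat) / (1 - xs (N - 1)%nat)) with 1 in * by (field; lra).
        destruct (IHk _ Iv) as [_ IH]. specialize (IH Huv).
        eapply Rle_trans; [exact Hb|]. apply ArA. split; [apply Rabs_pos|exact IH]. }
  exists th, (2 * K). split; [lra|split; [lra|]].
  induction k.
  - intros x y Ix Iy _. simpl. rewrite Rmult_1_r. pose proof (HB x y Ix Iy). lra.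
  - assert (W : forall x y, inI x -> inI y -> x <= y -> Rabs (x - y) <= a ^ S k ->
                 Rabs (h x - h y) <= 2 * K * th ^ S k).
    { intros x y Ix Iy Hxy Hd.
      assert (Hd' : y - x <= a ^ S k) by (rewrite Rabs_minus_sym, Rabs_pos_eq in Hd; lra).
      destruct (cell xs N Hord N ltac:(lia) x ltac:(unfold inI in *; lra)) as [i [Hi Hxi]].
      destruct (Rle_dec y (xs i)).
      + destruct (pull N xs c r h a g rho R0 i k x y Hlen Ha Hc Hr Hfe Hi)
          as [Iu [Iv [Huv Hb]]]; try lra.
        eapply Rle_trans; [exact Hb|]. apply ArB. split; [apply Rabs_pos|]. apply IHk; auto.
      + assert (iN : (i < N)%nat). { destruct (Nat.eq_dec i N); [subst; unfold inI in *; lra| lia]. }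
        pose proof (Hak k).
        pose proof (Hlen (S i) ltac:(lia)) as LS. replace (S i - 1)%nat with i in LS by lia.
        assert (P3 : Rabs (x - xs i) <= a ^ S k) by (rewrite Rabs_left1; lra).
        assert (Ho := Hord i Hi).
        destruct (pull N xs c r h a g rho R0 i k x (xs i) Hlen Ha Hc Hr Hfe Hi ltac:(lra) ltac:(lra) P3)
          as [Iu [Iv [Huv Hb]]].
        replace ((xs i - xs (i - 1)%nat) / (xs i - xs (i - 1)%nat)) with 1 in * by (field; pose proof (Hord i Hi); lra).
        assert (P4 : Rabs (xs i - y) <= a ^ S k) by (rewrite Rabs_left1; lra).
        assert (P5 : xs (S i - 1)%nat <= xs i <= xs (S i)) by (replace (S i - 1)%nat with i by lia; lra).
        assert (P6 : xs (S i - 1)%nat <= y <= xs (S i)) by (replace (S i - 1)%nat with i by lia; lra).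
        destruct (pull N xs c r h a g rho R0 (S i) k (xs i) y Hlen Ha Hc Hr Hfe ltac:(lia) P5 P6 P4)
          as [Iu' [Iv' [Huv' Hb']]].
        replace (S i - 1)%nat with i in * by lia.
        replace ((xs i - xs i) / (xs (S i) - xs i)) with 0 in * by (field; lra).
        destruct (E k _ Iu) as [_ E1]. rewrite Rabs_minus_sym in Huv. specialize (E1 Huv).
        destruct (E k _ Iv') as [E0 _]. specialize (E0 Huv').
        rewrite Rabs_minus_sym in E1.
        assert (A1 := ArA k _ (conj (Rabs_pos _) E1)).
        assert (A2 := ArA k _ (conj (Rabs_pos _) E0)).
        replace (h x - h y) with ((h x - h (xs i)) + (h (xs i) - h y)) by ring.
        eapply Rle_trans; [apply Rabs_triang|]. lra. }
    intros x y Ix Iy Hd. destruct (Rle_dec x y). apply W; auto.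
    rewrite Rabs_minus_sym. apply W; auto. lra. rewrite Rabs_minus_sym; auto.
Qed.
Lemma geo_to_lip (h : R -> R) a th K : 0 < a <= 1/2 -> 0 <= th < 1 -> 0 <= K ->
  (forall k x y, inI x -> inI y -> Rabs (x - y) <= a^k -> Rabs (h x - h y) <= K * th^k) ->
  exists d C, 0 < d <= 1 /\ 0 <= C /\
    forall x y, inI x -> inI y -> Rabs (h x - h y) <= C * rpow (Rabs (x - y)) d.
Proof.
  intros Ha Hth HK Hg.
  set (t := Rmax th a).
  assert (t1 : th <= t) by apply Rmax_l. assert (t2 : a <= t) by apply Rmax_r.
  assert (t3 : t < 1) by (apply Rmax_lub_lt; lra).
  assert (Hg' : forall k x y, inI x -> inI y -> Rabs (x - y) <= a^k -> Rabs (h x - h y) <= K * t^k).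
  { intros k x y Ix Iy H. eapply Rle_trans; [apply Hg; eauto|].
    apply Rmult_le_compat_l; auto. apply pow_incr; lra. }
  assert (la : ln a < 0) by (rewrite <- ln_1; apply ln_increasing; lra).
  assert (lt : ln t < 0) by (rewrite <- ln_1; apply ln_increasing; lra).
  assert (lat : ln a <= ln t).
  { destruct (Req_dec a t). rewrite H; lra. left; apply ln_increasing; lra. }
  set (d := ln t / ln a).
  assert (Hd : d * ln a = ln t) by (unfold d; field; lra).
  assert (d0 : 0 < d). { destruct (Rle_lt_dec d 0); auto. nra. }
  assert (d1 : d <= 1). { destruct (Rle_lt_dec d 1); auto. nra. }
  assert (Pa : Rpower a d = t). { unfold Rpower. rewrite Hd. apply exp_ln. lra. }
  exists d, (K / t). split; [lra|split].
  { apply Rmult_le_pos; auto. left; apply Rinv_0_lt_compat; lra. }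
  assert (Cl : forall n x y, inI x -> inI y -> a ^ n < Rabs (x - y) ->
             Rabs (h x - h y) <= K / t * rpow (Rabs (x - y)) d).
  { induction n; intros x y Ix Iy Hn.
    - simpl in Hn. unfold inI, Rabs in *. destruct Rcase_abs; lra.
    - destruct (Rlt_le_dec (a ^ n) (Rabs (x - y))). apply IHn; auto.
      eapply Rle_trans; [apply Hg'; eauto|].
      assert (P : 0 < a ^ S n) by (apply pow_lt; lra).
      rewrite rpow_pos by lra.
      replace (K * t ^ n) with (K / t * (t ^ S n)) by (simpl; field; lra).
      apply Rmult_le_compat_l. apply Rmult_le_pos; auto. left; apply Rinv_0_lt_compat; lra.
      rewrite <- Pa, <- Rpower_powk by lra. apply Rle_Rpower_l; lra. }
  intros x y Ix Iy. destruct (Req_dec x y).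
  - subst. replace (y - y) with 0 by ring. replace (h y - h y) with 0 by ring. rewrite Rabs_R0.
    pose proof (rpow_ge0 0 d). assert (0 <= K / t) by (apply Rmult_le_pos; auto; left; apply Rinv_0_lt_compat; lra).
    nra.
  - assert (Pd : 0 < Rabs (x - y)) by (apply Rabs_pos_lt; lra).
    destruct (pow_lt_1_zero a ltac:(rewrite Rabs_pos_eq; lra) _ Pd) as [n0 Hn0].
    specialize (Hn0 n0 (le_n _)). rewrite Rabs_pos_eq in Hn0 by (apply pow_le; lra).
    eapply Cl; eauto.
Qed.

Lemma key_lip
  (N : nat) (xs : nat -> R)
  (alpha beta gamma lam mu : nat -> R) (p q : nat -> R -> R)
  (f1 f2 : R -> R) :
  (2 <= N)%nat ->
  xs 0%nat = 0 -> xs N = 1 ->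
  (forall i, (1 <= i <= N)%nat -> xs (i - 1)%nat < xs i) ->
  (forall i, (1 <= i <= N)%nat ->
     Rabs (alpha i) < 1 /\ Rabs (beta i) + Rabs (gamma i) < 1 /\
     0 < lam i <= 1 /\ 0 < mu i <= 1 /\
     Lip (lam i) (p i) /\ Lip (mu i) (q i)) ->
  cont_on_I f1 -> cont_on_I f2 ->
  (forall i x, (1 <= i <= N)%nat -> inI x ->
     f1 (xs (i - 1)%nat + (xs i - xs (i - 1)%nat) * x)
       = alpha i * f1 x + beta i * f2 x + p i x /\
     f2 (xs (i - 1)%nat + (xs i - xs (i - 1)%nat) * x)
       = gamma i * f2 x + q i x) ->
  exists d C, 0 < d <= 1 /\ 0 <= C /\
    forall x y, inI x -> inI y -> Rabs (f1 x - f1 y) <= C * rpow (Rabs (x - y)) d.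
Proof.
  intros HN H0 H1 Hord Hpar Hc1 Hc2 Hfe.
  destruct (fin_lower (fun i => xs i - xs (i-1)%nat) N) as [a0 [Ha0 Hla0]].
  { intros i Hi. pose proof (Hord i Hi). lra. }
  set (a := Rmin a0 (1/2)).
  assert (Ha : 0 < a <= 1/2). { split. apply Rmin_pos; lra. apply Rmin_r. }
  assert (Hlen : forall i, (1<=i<=N)%nat -> a <= xs i - xs (i-1)%nat).
  { intros i Hi. eapply Rle_trans; [apply Rmin_l|]. apply Hla0; auto. }
  destruct (fin_lower (fun i => Rmin (lam i) (mu i)) N) as [e [He Hle]].
  { intros i Hi. destruct (Hpar i Hi) as [_ [_ [? [? _]]]]. apply Rmin_pos; lra. }
  set (rho := Rpower a e).
  assert (Hrho : 0 <= rho < 1).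
  { unfold rho, Rpower. split. left; apply exp_pos. rewrite <- exp_0. apply exp_increasing.
    assert (ln a < 0) by (rewrite <- ln_1; apply ln_increasing; lra). nra. }
  assert (Hrk : forall C k u v, 0 <= C -> Rabs (u - v) <= a ^ k ->
             C * rpow (Rabs (u - v)) e <= C * rho ^ k).
  { intros C k u v HC Huv. apply Rmult_le_compat_l; auto.
    eapply Rle_trans. apply rpow_mono_base; [lra| split; [apply Rabs_pos|exact Huv]].
    rewrite rpow_pos by (apply pow_lt; lra). unfold rho. rewrite Rpower_powk by lra. lra. }
  assert (Lipe : forall (l : R) (f : R -> R), e <= l -> Lip l f -> exists C, 
     forall u v, inI u -> inI v -> Rabs (f u - f v) <= C * rpow (Rabs (u - v)) e).
  { intros l f Hel [C HC]. exists (Rmax C 0). intros u v Iu Iv.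
    eapply Rle_trans; [apply HC; auto|].
    assert (Hd : 0 <= Rabs (u - v) <= 1) by (split; [apply Rabs_pos|unfold inI, Rabs in *; destruct Rcase_abs; lra]).
    pose proof (rpow_mono_exp _ _ _ Hd Hel). pose proof (rpow_ge0 (Rabs (u - v)) l).
    pose proof (Rmax_l C 0). pose proof (Rmax_r C 0). nra. }
  assert (Mono : forall (f : nat -> R -> R) i C C',
     (forall u v, inI u -> inI v -> Rabs (f i u - f i v) <= C * rpow (Rabs (u - v)) e) -> C <= C' ->
     (forall u v, inI u -> inI v -> Rabs (f i u - f i v) <= C' * rpow (Rabs (u - v)) e)).
  { intros f i C C' HC HCC u v Iu Iv. eapply Rle_trans; [apply HC; auto|].
    apply Rmult_le_compat_r; auto. apply rpow_ge0. }
  destruct (fin_upper (fun i C => forall u v, inI u -> inI v -> Rabs (q i u - q i v) <= C * rpow (Rabs (u - v)) e) N)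
    as [Cq [HCq Hq]].
  { intros i Hi. destruct (Hpar i Hi) as [_ [_ [_ [_ [_ Lq]]]]]. eapply Lipe; [|exact Lq].
    pose proof (Hle i Hi). pose proof (Rmin_r (lam i) (mu i)). lra. }
  { intros i C C'. apply Mono. }
  destruct (fin_upper (fun i C => forall u v, inI u -> inI v -> Rabs (p i u - p i v) <= C * rpow (Rabs (u - v)) e) N)
    as [Cp [HCp Hp]].
  { intros i Hi. destruct (Hpar i Hi) as [_ [_ [_ [_ [Lp _]]]]]. eapply Lipe; [|exact Lp].
    pose proof (Hle i Hi). pose proof (Rmin_l (lam i) (mu i)). lra. }
  { intros i C C'. apply Mono. }
  destruct (fin_gmax gamma N) as [g2 [Hg2 Hcg2]].
  { intros i Hi. destruct (Hpar i Hi) as [_ [? _]]. pose proof (Rabs_pos (beta i)). lra. }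
  destruct (bounded f2 Hc2) as [B2 [_ HB2]].
  destruct (gen_geo N xs gamma q f2 a g2 rho Cq B2 ltac:(lia) H0 H1 Hord Hlen ltac:(lra) ltac:(lra)
     Hg2 Hcg2 Hrho HCq) as [th2 [K2 [Hth2 [HK2 G2]]]]; auto.
  { intros i k u v Hi Iu Iv Huv. eapply Rle_trans; [apply Hq; auto|]. apply Hrk; auto. }
  { intros i x Hi Ix. apply (Hfe i x Hi Ix). }
  destruct (fin_gmax alpha N) as [g1 [Hg1 Hcg1]].
  { intros i Hi. destruct (Hpar i Hi) as [? _]. auto. }
  destruct (bounded f1 Hc1) as [B1 [_ HB1]].
  set (rho' := Rmax th2 rho).
  assert (Hrho' : 0 <= rho' < 1).
  { split. eapply Rle_trans; [|apply Rmax_l]; lra. apply Rmax_lub_lt; lra. }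
  destruct (gen_geo N xs alpha (fun i x => beta i * f2 x + p i x) f1 a g1 rho' (K2 + Cp) B1 ltac:(lia)
     H0 H1 Hord Hlen ltac:(lra) ltac:(lra) Hg1 Hcg1 Hrho' ltac:(lra)) as [th1 [K1 [Hth1 [HK1 G1]]]]; auto.
  { intros i k u v Hi Iu Iv Huv.
    replace (beta i * f2 u + p i u - (beta i * f2 v + p i v))
      with (beta i * (f2 u - f2 v) + (p i u - p i v)) by ring.
    eapply Rle_trans; [apply Rabs_triang|]. rewrite Rabs_mult.
    destruct (Hpar i Hi) as [_ [Hb _]].
    assert (Hb1 : Rabs (beta i) <= 1) by (pose proof (Rabs_pos (gamma i)); lra).
    pose proof (G2 k u v Iu Iv Huv) as A2.
    pose proof (Rle_trans _ _ _ (Hp i Hi u v Iu Iv) (Hrk Cp k u v HCp Huv)) as A1.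
    pose proof (pow_incr th2 rho' k ltac:(split; [lra|apply Rmax_l])).
    pose proof (pow_incr rho rho' k ltac:(split; [lra|apply Rmax_r])).
    pose proof (pow_le th2 k ltac:(lra)). pose proof (pow_le rho k ltac:(lra)).
    pose proof (Rabs_pos (beta i)). pose proof (Rabs_pos (f2 u - f2 v)).
    assert (Rabs (beta i) * Rabs (f2 u - f2 v) <= K2 * th2 ^ k) by nra.
    assert (K2 * th2 ^ k <= K2 * rho' ^ k) by (apply Rmult_le_compat_l; lra).
    assert (Cp * rho ^ k <= Cp * rho' ^ k) by (apply Rmult_le_compat_l; lra).
    nra. }
  { intros i x Hi Ix. destruct (Hfe i x Hi Ix) as [E _]. rewrite E. ring. }
  exact (geo_to_lip f1 a th1 K1 Ha Hth1 HK1 G1).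
Qed.

Theorem theorem3p1
  (N : nat) (xs : nat -> R)
  (alpha beta gamma lam mu : nat -> R) (p q : nat -> R -> R)
  (f1 f2 : R -> R) :
  (2 <= N)%nat ->
  xs 0%nat = 0 -> xs N = 1 ->
  (forall i, (1 <= i <= N)%nat -> xs (i - 1)%nat < xs i) ->
  (forall i, (1 <= i <= N)%nat ->
     Rabs (alpha i) < 1 /\ Rabs (beta i) + Rabs (gamma i) < 1 /\
     0 < lam i <= 1 /\ 0 < mu i <= 1 /\
     Lip (lam i) (p i) /\ Lip (mu i) (q i)) ->
  cont_on_I f1 -> cont_on_I f2 ->
  (forall i x, (1 <= i <= N)%nat -> inI x ->
     f1 (xs (i - 1)%nat + (xs i - xs (i - 1)%nat) * x)
       = alpha i * f1 x + beta i * f2 x + p i x /\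
     f2 (xs (i - 1)%nat + (xs i - xs (i - 1)%nat) * x)
       = gamma i * f2 x + q i x) ->
  let lenI := fun i => xs i - xs (i - 1)%nat in
  let lamm := min_1N lam N in
  let mu0 := min_1N mu N in
  let Omg := max_1N (fun i => Rabs (alpha i) / rpow (lenI i) lamm) N in
  let Gam := max_1N (fun i => Rabs (gamma i) / rpow (lenI i) mu0) N in
  let Tht := max_1N (fun i => Rabs (alpha i) / rpow (lenI i) mu0) N in
  Tht < 1 ->
  ((Omg <> 1 /\ Gam <> 1 ->
      exists delta, 0 < delta <= 1 /\ Lip delta f1) /\
   (Omg = 1 \/ Gam = 1 ->
      exists delta, 0 < delta <= 1 /\
        exists C t0, 0 < t0 /\ forall t, 0 < Rabs t < t0 ->
          Rbar_le (modcont f1 t)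
                  (Finite (C * Rabs (rpow (Rabs t) delta * ln (Rabs t)))))).
Proof.
  intros HN H0 H1 Hord Hpar Hc1 Hc2 Hfe lenI lamm mu0 Omg Gam Tht HT.
  destruct (key_lip N xs alpha beta gamma lam mu p q f1 f2 HN H0 H1 Hord Hpar Hc1 Hc2 Hfe)
    as [d [C [Hd [HC HL]]]].
  split.
  - intros _. exists d. split; auto. exists C. exact HL.
  - intros _. exists d. split; auto. exists C, (exp (-1)). split; [apply exp_pos|].
    intros t [Ht0 Ht1].
    assert (Hln : ln (Rabs t) < -1) by (rewrite <- (ln_exp (-1)); apply ln_increasing; lra).
    destruct (Lub_Rbar_correct (fun r => exists x y, inI x /\ inI y /\ Rabs (x - y) <= Rabs t /\
                                 r = Rabs (f1 x - f1 y))) as [_ Hl].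
    unfold modcont. apply Hl. intros r [x [y [Ix [Iy [Hxy ->]]]]]. simpl.
    eapply Rle_trans; [apply HL; auto|].
    rewrite Rabs_mult, (Rabs_pos_eq (rpow _ _)) by apply rpow_ge0.
    rewrite (Rabs_left (ln _)) by lra.
    pose proof (rpow_mono_base (Rabs (x - y)) (Rabs t) d ltac:(lra) (conj (Rabs_pos _) Hxy)).
    pose proof (rpow_ge0 (Rabs t) d).
    apply Rmult_le_compat_l; auto. nra.
Qed.
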